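(* Let $G$ be a triangle-free graph with at least five vertices and minimum degree at least $3$. Define $G'$ with vertex set $V(G)\times\{0,1,2,3\}$ whose edges are: $(v,i)(v,j)$ for every $v\in V(G)$ and distinct $i,j\in\{0,1,2,3\}$; $(u,0)(v,0)$ for all distinct $u,v\in V(G)$; and $(u,i)(v,i)$ for $i\in\{1,2,3\}$ whenever $uv\in E(G)$; there are no other edges. Let $C=V(G)\times\{0\}$ (a clique of $G'$). Let $G''$ be obtained from $G'$ by adding, for each $w\in V(G')\setminus C$, a new vertex $w'$ adjacent only to $w$. Then $G'$ and $G''$ are diamond-free, and the following are equivalent: (1) $G$ is not $3$-colorable; (2) $C$ is a strong clique in $G'$; (3) $G'$ has a strong clique; (4) $C$ is a strong clique in $G''$; (5) every vertex of $G''$ is contained in a strong clique; (6) every clique in the collection $\{C\}\cup\{\{w,w'\}: w\in V(G')\setminus C\}$ is strong in $G''$; (7) $V(G'')$ can be partitioned into strong cliques.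
   Context: A clique is strong if it intersects every inclusion-maximal stable set. The diamond is $K_4$ minus one edge; diamond-free means no induced subgraph isomorphic to the diamond. A graph is $3$-colorable if its vertex set can be partitioned into three stable sets. *)

(* Defs.v *)
From mathcomp Require Import all_boot.
Set Implicit Arguments. Unset Strict Implicit. Unset Printing Implicit Defensive.

Section Graphs.
Variables (V : finType) (g : rel V).

Definition simple_graph : Prop := symmetric g /\ irreflexive g.

Definition triangle_free : Prop :=
  forall a b c : V, g a b -> g b c -> g a c -> False.

Definition min_degree_ge (k : nat) : Prop :=
  forall v : V, k <= #|[set u | g v u]|.

Definition is_clique (K : {set V}) : Prop :=
  forall x y, x \in K -> y \in K -> x != y -> g x y.

Definition is_stable (S : {set V}) : Prop :=
  forall x y, x \in S -> y \in S -> ~~ g x y.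

Definition maximal_stable (S : {set V}) : Prop :=
  is_stable S /\ forall S' : {set V}, is_stable S' -> S \subset S' -> S' = S.

Definition strong_clique (K : {set V}) : Prop :=
  is_clique K /\ forall S, maximal_stable S -> exists x, (x \in K) && (x \in S).

Definition diamond_free : Prop :=
  ~ exists a b c d : V,
      [/\ uniq [:: a; b; c; d],
          [&& g a b, g a c, g a d, g b c & g b d] & ~~ g c d].

Definition three_colorable : Prop :=
  exists f : V -> 'I_3, forall x y, g x y -> f x != f y.

Definition has_strong_clique : Prop := exists K : {set V}, strong_clique K.

Definition every_vertex_in_strong_clique : Prop :=
  forall v : V, exists K : {set V}, v \in K /\ strong_clique K.

Definition strong_clique_partition : Prop :=
  exists P : {set {set V}}, partition P [set: V] /\
     forall K : {set V}, K \in P -> strong_clique K.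

End Graphs.

Section Construction.
Variables (T : finType) (e : rel T).

Definition Gp : rel (T * 'I_4) := fun x y =>
  [|| (x.1 == y.1) && (x.2 != y.2),
      [&& x.1 != y.1, x.2 == ord0 & y.2 == ord0]
    | [&& x.2 == y.2, x.2 != ord0 & e x.1 y.1]].

Definition Cp : {set T * 'I_4} := [set x | x.2 == ord0].

Definition nonC := {w : T * 'I_4 | w.2 != ord0}.

(* G'': vertices of G' (inl) plus a pendant vertex w' (inr w) for each w not in C. *)
Definition Gpp : rel ((T * 'I_4) + nonC) := fun x y =>
  match x, y with
  | inl a, inl b => Gp a b
  | inl a, inr w => a == val w
  | inr w, inl a => a == val w
  | inr _, inr _ => false
  end.

Definition Cpp : {set (T * 'I_4) + nonC} := [set inl x | x in Cp].

Definition pendant_pair (w : nonC) : {set (T * 'I_4) + nonC} :=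
  [set inl (val w); inr w].

End Construction.

(* Main.v *)
Require Import Defs.
From mathcomp Require Import all_boot.
Set Implicit Arguments. Unset Strict Implicit. Unset Printing Implicit Defensive.


Section Gen.
Variables (V : finType) (g : rel V).

Definition stb (S : {set V}) := [forall x in S, forall y in S, ~~ g x y].

Lemma stbP S : reflect (is_stable g S) (stb S).
Proof.
apply: (iffP forall_inP) => [H x y xS yS|H x xS].
  by move/forall_inP: (H x xS); apply.
by apply/forall_inP => y yS; apply: H.
Qed.

Lemma ext_max S0 : is_stable g S0 -> exists2 S, maximal_stable g S & S0 \subset S.
Proof.
move/stbP=> h; case: (maxset_exists h) => S /maxsetP [/stbP sS mS] sub.
exists S => //; split => // S' /stbP sS' sub'; exact: mS.
Qed.

Lemma not_strong S0 (K : {set V}) : is_stable g S0 ->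
  (forall x, x \in K -> exists2 y, y \in S0 & g x y) -> ~ strong_clique g K.
Proof.
move=> st dom [_ H]; case: (ext_max st) => S mS sub.
case: (H S mS) => x /andP [xK xS]; case: (dom x xK) => y yS0 gxy.
have yS := subsetP sub y yS0.
by case: mS => stS _; move: (stS x y xS yS); rewrite gxy.
Qed.

Lemma max_dom S x : irreflexive g -> maximal_stable g S -> x \notin S ->
  exists2 y, y \in S & (g x y || g y x).
Proof.
move=> irr [stS mS] xS.
case: (boolP [exists y in S, g x y || g y x]) => [/exists_inP [y yS h]|].
  by exists y.
move/exists_inPn => h; exfalso.
have st' : is_stable g (x |: S).
  move=> a b; rewrite !inE => /orP [/eqP->|aS] /orP [/eqP->|bS].
  - by rewrite irr.
  - by have := h b bS; rewrite negb_or => /andP [].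
  - by have := h a aS; rewrite negb_or => /andP [].
  - exact: stS.
have := mS _ st' (subsetUr _ _) => E.
by move: xS; rewrite -E setU11.
Qed.

End Gen.

Section GpFacts.
Variables (T : finType) (e : rel T).
Hypotheses (esym : symmetric e) (eirr : irreflexive e) (tf : triangle_free e).

Lemma Gp_irr : irreflexive (Gp e).
Proof. by move=> x; rewrite /Gp !eqxx eirr /= !andbF. Qed.

Lemma Gp_sym : symmetric (Gp e).
Proof.
move=> x y; rewrite /Gp; congr [|| _, _ | _].
- by rewrite eq_sym [y.2 == _]eq_sym.
- by rewrite eq_sym; congr (_ && _); rewrite andbC.
- by case: (x.2 =P y.2) => [->|ne] /=; [rewrite eqxx esym | case: eqP => // E; case: ne].
Qed.

Lemma F1 x y : Gp e x y -> x.1 = y.1 -> x.2 != y.2.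
Proof.
by rewrite /Gp => + E; rewrite E eqxx /= eirr !andbF orbF.
Qed.

Lemma F2 x y : Gp e x y -> x.1 != y.1 -> x.2 = y.2 /\ (x.2 != ord0 -> e x.1 y.1).
Proof.
rewrite /Gp => + ne; rewrite (negbTE ne) /=.
case/orP => [/andP [/eqP-> /eqP->]|/and3P [/eqP-> h ee]] //.
Qed.

Lemma triangle x y z : Gp e x y -> Gp e y z -> Gp e x z ->
  (x.2 = ord0 /\ y.2 = ord0 /\ z.2 = ord0) \/ (x.1 = y.1 /\ y.1 = z.1).
Proof.
move=> xy yz xz.
case: (x.1 =P y.1) => [exy|nxy].
  case: (y.1 =P z.1) => [eyz|nyz]; first by right.
  have [h1 _] := F2 yz (introN eqP nyz).
  have nxz : x.1 != z.1 by rewrite exy; exact/eqP.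
  have [h2 _] := F2 xz nxz.
  by move: (F1 xy exy); rewrite h1 h2 eqxx.
have [h1 h1'] := F2 xy (introN eqP nxy).
case: (x.2 =P ord0) => [x0|xn0]; last first.
  have exy := h1' (introN eqP xn0).
  case: (y.1 =P z.1) => [eyz|nyz].
    have nxz : x.1 != z.1 by rewrite -eyz; exact/eqP.
    have [h2 _] := F2 xz nxz.
    by move: (F1 yz eyz); rewrite -h1 h2 eqxx.
  case: (x.1 =P z.1) => [exz|nxz].
    have [h2 _] := F2 yz (introN eqP nyz).
    by move: (F1 xz exz); rewrite h1 h2 eqxx.
  have [h2 h2'] := F2 xz (introN eqP nxz).
  have [h3 h3'] := F2 yz (introN eqP nyz).
  exfalso; apply: (tf exy).
    by apply: h3'; rewrite -h1; exact/eqP.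
  by apply: h2'; exact/eqP.
left; split => //; split; first by rewrite -h1.
case: (x.1 =P z.1) => [exz|nxz].
  have nyz : y.1 != z.1 by rewrite -exz eq_sym; exact/eqP.
  have [h2 _] := F2 yz nyz.
  by move: (F1 xz exz); rewrite h1 h2 eqxx.
by have [h2 _] := F2 xz (introN eqP nxz); rewrite -h2.
Qed.

Lemma pair_eq (x y : T * 'I_4) : x.1 = y.1 -> x.2 = y.2 -> x = y.
Proof. by case: x y => [? ?] [? ?] /= -> ->. Qed.

Lemma Gp_diamond : diamond_free (Gp e).
Proof.
move=> [a [b [c [d [U /and5P [ab ac ad bc bd] ncd]]]]].
move: U; rewrite /= !inE !negb_or => /and4P [/and3P [nab nac nad] /andP [nbc nbd] ncd' _].
have abc := triangle ab bc ac.
have abd := triangle ab bd ad.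
case: abc => [[a0 [b0 c0]]|[e1 e2]]; case: abd => [[a0' [b0' d0]]|[f1 f2]].
- have : c.1 != d.1.
    apply/negP => /eqP E; move/negP: ncd'; apply; apply/eqP; apply: pair_eq E _; by rewrite c0 d0.
  move=> ne; move/negP: ncd; apply; by rewrite /Gp ne c0 d0 eqxx /= orbT.
- by move/negP: nab; apply; apply/eqP; apply: pair_eq; rewrite ?a0 ?b0 ?a0' ?b0'.
- by move/negP: nab; apply; apply/eqP; apply: pair_eq; rewrite ?a0 ?b0 ?a0' ?b0'.
- have E : c.1 = d.1 by rewrite -e2 -f2.
  have : c.2 != d.2.
    apply/negP => /eqP E'; move/negP: ncd'; apply; apply/eqP; exact: pair_eq.
  by move=> ne; move/negP: ncd; apply; rewrite /Gp E eqxx ne.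
Qed.

End GpFacts.

Section GppFacts.
Variables (T : finType) (e : rel T).
Hypotheses (esym : symmetric e) (eirr : irreflexive e) (tf : triangle_free e).

Lemma Gpp_irr : irreflexive (Gpp e).
Proof. by case=> [a|w] //=; apply: Gp_irr. Qed.

Lemma Gpp_sym : symmetric (Gpp e).
Proof. by case=> [a|w] [b|w'] //=; apply: Gp_sym. Qed.

Lemma inr_l w x : Gpp e (inr w) x -> x = inl (val w).
Proof. by case: x => //= a /eqP ->. Qed.

Lemma inr_r w x : Gpp e x (inr w) -> x = inl (val w).
Proof. by case: x => //= a /eqP ->. Qed.

Lemma Gpp_diamond : diamond_free (Gpp e).
Proof.
move=> [a [b [c [d [U /and5P [ab ac ad bc bd] ncd]]]]].
move: U; rewrite /= !inE !negb_or => /and4P [/and3P [nab nac nad] /andP [nbc nbd] ncd' _].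
case: a ab ac ad nab nac nad => [a|w] ab ac ad nab nac nad; last first.
  by move: nbc; rewrite (inr_l ab) (inr_l ac) eqxx.
case: b ab bc bd nab nbc nbd => [b|w] ab bc bd nab nbc nbd; last first.
  by move: ncd'; rewrite (inr_l bc) (inr_l bd) eqxx.
case: c ac bc ncd nac nbc ncd' => [c|w] ac bc ncd nac nbc ncd'; last first.
  by move: nab; rewrite (inr_r bc) (inr_r ac) eqxx.
case: d ad bd ncd nad nbd ncd' => [d|w] ad bd ncd nad nbd ncd'; last first.
  by move: nab; rewrite (inr_r bd) (inr_r ad) eqxx.
case: (Gp_diamond eirr tf); exists a, b, c, d; split => //=.
  by rewrite !inE !negb_or; move: nab nac nad nbc nbd ncd'; rewrite !(inj_eq (@inl_inj _ _)) => -> -> -> -> -> ->.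
by apply/and5P; split.
Qed.

End GppFacts.

Lemma third (i : 'I_4) : exists j : 'I_4, (j != ord0) && (j != i).
Proof.
case: i => [[|[|[|[|m]]]] Hi] //;
 [exists (@Ordinal 4 1 isT) | exists (@Ordinal 4 2 isT) | exists (@Ordinal 4 1 isT) | exists (@Ordinal 4 1 isT)]; by [].
Qed.

Section Dom.
Variables (T : finType) (e : rel T).
Hypotheses (esym : symmetric e) (eirr : irreflexive e) (tf : triangle_free e).

Lemma dist_stable (S0 : {set T * 'I_4}) :
  (forall p q, p \in S0 -> q \in S0 -> p != q -> (p.1 != q.1) && (p.2 != q.2)) ->
  is_stable (Gp e) S0.
Proof.
move=> H p q pS qS; case: (eqVneq p q) => [->|ne]; first by rewrite Gp_irr.
case/andP: (H p q pS qS ne) => n1 n2.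
rewrite /Gp (negbTE n1) (negbTE n2) /= ?andbF ?orbF.
apply/negP => /andP [/eqP p0 /eqP q0]; by move: n2; rewrite p0 q0 eqxx.
Qed.

Lemma col_dom (u : T) : 5 <= #|T| -> min_degree_ge e 3 ->
  exists S0, is_stable (Gp e) S0 /\ forall k : 'I_4, exists2 y, y \in S0 & Gp e (u, k) y.
Proof.
move=> cT md.
pose N := [set y | e u y].
have cN : 3 <= size (enum N) by rewrite -cardE; exact: md.
have mN : forall y, y \in enum N -> e u y by move=> y; rewrite mem_enum inE.
have uN := enum_uniq N.
case E: (enum N) cN mN uN => [|w1 [|w2 [|w3 s]]] // _ mN.
rewrite /= !inE !negb_or => /and4P [/and3P [n12 n13 _] /andP [n23 _] _ _].
have e1 : e u w1 by apply: mN; rewrite !inE eqxx.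
have e2 : e u w2 by apply: mN; rewrite !inE eqxx orbT.
have e3 : e u w3 by apply: mN; rewrite !inE eqxx !orbT.
have [x xn] : exists x, x \notin [:: u; w1; w2; w3].
  apply/existsP; rewrite -negb_forall; apply/negP => /forallP H.
  have : #|T| <= #|[:: u; w1; w2; w3]|.
    by apply: subset_leq_card; apply/subsetP => y _; apply: H.
  by move=> h; have := leq_trans h (card_size _); move: cT => /leq_trans H' /H'.
move: xn; rewrite !inE !negb_or => /and4P [nxu nx1 nx2 nx3].
pose sq := [:: x; w1; w2; w3].
have usq : uniq sq.
  by rewrite /= !inE !negb_or nx1 nx2 nx3 n12 n13 n23.
exists [set (nth x sq k, k) | k : 'I_4]; split.
  apply: dist_stable => p q /imsetP [k _ ->] /imsetP [l _ ->] ne /=.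
  have kl : k != l by apply: contra ne => /eqP ->.
  by rewrite nth_uniq ?ltn_ord // kl.
move=> k; exists (nth x sq k, k); first by apply: imset_f.
case: k => [[|[|[|[|m]]]] Hk] //; rewrite /Gp /=.
- have -> : Ordinal Hk = ord0 by apply: val_inj.
  by rewrite eqxx andbF andbT orFb orbF eq_sym.
- by rewrite e1 !orbT.
- by rewrite e2 !orbT.
- by rewrite e3 !orbT.
Qed.

Lemma edge_dom (a b : T * 'I_4) : a.1 != b.1 -> a.2 = b.2 -> a.2 != ord0 ->
  exists S0, is_stable (Gp e) S0 /\ forall x, (x == a) || (x == b) ->
     exists2 y, y \in S0 & Gp e x y.
Proof.
move=> n1 e2 n0; have [j /andP [j0 ja]] := third a.2.
exists [set (a.1, ord0); (b.1, j)]; split.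
  apply: dist_stable => p q; rewrite !inE => /orP [] /eqP -> /orP [] /eqP -> //=; rewrite ?eqxx //=. - by move=> _; rewrite n1 (eq_sym ord0) j0.
  - by move=> _; rewrite (eq_sym b.1) n1 j0.
move=> x /orP [] /eqP ->.
  exists (a.1, ord0); first by rewrite !inE eqxx.
  by rewrite /Gp /= eqxx n0.
exists (b.1, j); first by rewrite !inE eqxx orbT.
by rewrite /Gp /= eqxx -e2 eq_sym ja.
Qed.

Lemma color_dom : three_colorable e ->
  exists S0, is_stable (Gp e) S0 /\ forall x, x \in Cp T -> exists2 y, y \in S0 & Gp e x y.
Proof.
move=> [f fc].
exists [set y : T * 'I_4 | y.2 == lift ord0 (f y.1)]; split.
  move=> p q; rewrite !inE => /eqP p2 /eqP q2; apply/negP => pq.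
  case: (p.1 =P q.1) => [E|ne].
    by move: (F1 eirr pq E); rewrite p2 q2 E eqxx.
  have [h1 h2] := F2 pq (introN eqP ne).
  have epq : e p.1 q.1 by apply: h2; rewrite p2 eq_sym neq_lift.
  move: (fc _ _ epq); apply/negP; rewrite negbK; apply/eqP.
  by apply: (@lift_inj _ ord0); rewrite -p2 -q2.
move=> x; rewrite inE => /eqP x0.
exists (x.1, lift ord0 (f x.1)); first by rewrite inE /=.
by rewrite /Gp /= eqxx x0 neq_lift.
Qed.

Lemma dom_clique : 5 <= #|T| -> min_degree_ge e 3 -> three_colorable e ->
  forall K, is_clique (Gp e) K ->
  exists S0, is_stable (Gp e) S0 /\ forall x, x \in K -> exists2 y, y \in S0 & Gp e x y.
Proof.
move=> cT md col K cK.
case: (boolP [forall a in K, a.2 == ord0]) => [/forall_inP H|].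
  have [S0 [st dom]] := color_dom col.
  by exists S0; split => // x xK; apply: dom; rewrite inE; apply: H.
rewrite negb_forall_in => /exists_inP [a aK a0].
case: (boolP [forall b in K, b.1 == a.1]) => [/forall_inP H|].
  have [S0 [st dom]] := col_dom a.1 cT md.
  exists S0; split => // x xK.
  have -> : x = (a.1, x.2) by case: x xK => x1 x2 /H /= /eqP ->.
  exact: dom.
rewrite negb_forall_in => /exists_inP [b bK ba].
have nab : a.1 != b.1 by rewrite eq_sym.
have ab : a != b by apply: contra nab => /eqP ->.
have gab := cK _ _ aK bK ab.
have [e2 _] := F2 gab nab.
have [S0 [st dom]] := edge_dom nab e2 a0.
exists S0; split => // x xK; apply: dom.
case: (eqVneq x a) => //= xa; case: (eqVneq x b) => //= xb.
have := triangle eirr tf (cK _ _ xK aK xa) gab (cK _ _ xK bK xb).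
case=> [[_ [a0' _]]|[_ ab1]]; first by move: a0; rewrite a0' eqxx.
by move: nab; rewrite ab1 eqxx.
Qed.

End Dom.

Lemma strong_by_contra (V : finType) (g : rel V) (K : {set V}) : is_clique g K ->
  (forall S, maximal_stable g S -> (forall x, x \in K -> x \notin S) -> False) ->
  strong_clique g K.
Proof.
move=> cK H; split => // S mS.
case: (boolP [exists x in K, x \in S]) => [/exists_inP [x xK xS]|]; first by exists x; rewrite xK.
by move/exists_inPn => h; case: (H S mS h).
Qed.

Section Main.
Variables (T : finType) (e : rel T).
Hypotheses (esym : symmetric e) (eirr : irreflexive e) (tf : triangle_free e).

Lemma peq (x y : T * 'I_4) : x.1 = y.1 -> x.2 = y.2 -> x = y.
Proof. by case: x y => [? ?] [? ?] /= -> ->. Qed.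

Lemma coloring_from (P : pred (T * 'I_4)) :
  (forall v, exists j : 'I_3, P (v, lift ord0 j)) ->
  (forall a b, P a -> P b -> ~~ Gp e a b) -> three_colorable e.
Proof.
move=> ex st.
exists (fun v => odflt ord0 [pick j | P (v, lift ord0 j)]) => u v euv.
case: pickP => [ju Pu|]; last by case: (ex u) => j Pj /(_ j); rewrite Pj.
case: pickP => [jv Pv|]; last by case: (ex v) => j Pj /(_ j); rewrite Pj.
apply/negP => /eqP /= E; rewrite E in Pu.
by move: (st _ _ Pu Pv); rewrite /Gp /= eqxx euv /= !orbT.

Qed.

Lemma nbr0 v y : Gp e (v, ord0) y -> y.2 != ord0 -> exists j : 'I_3, y = (v, lift ord0 j).
Proof.
move=> g y0; case: (v =P y.1) => [E|ne].
  case: (unliftP ord0 y.2) => [j Ej|E0]; last by move: y0; rewrite E0 eqxx.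
  by exists j; rewrite -Ej E; case: (y) => ? ?.
by have [/= E _] := F2 g (introN eqP ne); move: y0; rewrite -E eqxx.
Qed.

Lemma Cp_clique : is_clique (Gp e) (Cp T).
Proof.
move=> x y; rewrite !inE => /eqP x0 /eqP y0 ne.
have n1 : x.1 != y.1 by apply: contra ne => /eqP E; apply/eqP; apply: peq; rewrite ?x0 ?y0.
by rewrite /Gp n1 x0 y0 eqxx /= orbT.
Qed.

Lemma inl_Cpp a : (inl a \in Cpp T) = (a \in Cp T).
Proof. by rewrite mem_imset //; move=> ? ? [->]. Qed.

Lemma inr_Cpp w : (inr w \in Cpp T) = false.
Proof. by apply/negP => /imsetP [? _]. Qed.

Lemma Cpp_clique : is_clique (Gpp e) (Cpp T).
Proof.
move=> [a|w] [b|w']; rewrite ?inr_Cpp // !inl_Cpp => aC bC ne /=.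
by apply: Cp_clique => //; apply: contra ne => /eqP ->.
Qed.

Lemma Cp_strong : ~ three_colorable e -> strong_clique (Gp e) (Cp T).
Proof.
move=> ncol; apply: strong_by_contra; first exact: Cp_clique.
move=> S mS H; apply: ncol; apply: (@coloring_from (fun a => a \in S)).
  move=> v.
  have vS : (v, ord0) \notin S by apply: H; rewrite inE.
  have [y yS gy] := max_dom (Gp_irr eirr) mS vS.
  have gy' : Gp e (v, ord0) y by case/orP: gy => //; rewrite Gp_sym.
  have y0 : y.2 != ord0 by apply/negP => y0; move: (H y); rewrite inE y0 yS => /(_ isT).
  by case: (nbr0 gy' y0) => j E; exists j; rewrite -E.
by move=> a b aS bS; case: mS => st _; apply: st.
Qed.

Lemma Cpp_strong : ~ three_colorable e -> strong_clique (Gpp e) (Cpp T).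
Proof.
move=> ncol; apply: strong_by_contra; first exact: Cpp_clique.
move=> S mS H; apply: ncol; apply: (@coloring_from (fun a => inl a \in S)).
  move=> v.
  have vS : inl (v, ord0) \notin S by apply: H; rewrite inl_Cpp inE.
  have [y yS gy] := max_dom (Gpp_irr eirr) mS vS.
  have gy' : Gpp e (inl (v, ord0)) y by case/orP: gy => //; rewrite Gpp_sym.
  clear gy; case: y yS gy' => [b|w] yS gy' /=; last first.
    by move: gy' (valP w) => /= /eqP <-; rewrite eqxx.
  have y0 : b.2 != ord0.
    by apply/negP => y0; move: (H (inl b)); rewrite inl_Cpp inE y0 yS => /(_ isT).
  by case: (nbr0 gy' y0) => j E; exists j; rewrite -E.
by move=> a b aS bS; case: mS => st _; apply: (st (inl a) (inl b)).
Qed.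

Lemma pend_strong w : strong_clique (Gpp e) (pendant_pair w).
Proof.
apply: strong_by_contra.
  move=> x y; rewrite !inE => /orP [] /eqP -> /orP [] /eqP -> //=; rewrite ?eqxx //.
move=> S mS H.
have wS : inr w \notin S by apply: H; rewrite !inE eqxx orbT.
have [y yS gy] := max_dom (Gpp_irr eirr) mS wS.
have E : y = inl (val w) by case/orP: gy => [/inr_l|/inr_r].
by have := H (inl (val w)); rewrite !inE eqxx -E yS => /(_ isT).
Qed.

Lemma stable_inl S0 : is_stable (Gp e) S0 -> is_stable (Gpp e) (inl @: S0).
Proof. by move=> st x y /imsetP [a aS ->] /imsetP [b bS ->] /=; apply: st. Qed.

Lemma not_col_of_strong (K : {set T * 'I_4}) : 5 <= #|T| -> min_degree_ge e 3 ->
  is_clique (Gp e) K -> strong_clique (Gp e) K -> ~ three_colorable e.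
Proof.
move=> cT md cK sK col.
have [S0 [st dom]] := dom_clique eirr tf cT md col cK.
exact: (not_strong st dom).
Qed.

Lemma not_col_of_vertex (v : T) (K : {set (T * 'I_4) + nonC T}) : 5 <= #|T| -> min_degree_ge e 3 ->
  inl (v, ord0) \in K -> strong_clique (Gpp e) K -> ~ three_colorable e.
Proof.
move=> cT md vK sK col.
have allinl : forall x, x \in K -> exists a, x = inl a.
  case=> [a|w] xK; first by exists a.
  have : Gpp e (inl (v, ord0)) (inr w) by apply: sK.1.
  by move: (valP w) => /= + /eqP E; rewrite -E eqxx.
pose K' := [set a | inl a \in K].
have cK' : is_clique (Gp e) K'.
  move=> a b; rewrite !inE => aK bK ne.
  have nel : inl a != inl b :> (T * 'I_4) + nonC T by rewrite (inj_eq (@inl_inj _ _)).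
  exact: (sK.1 (inl a) (inl b) aK bK nel).
have [S0 [st dom]] := dom_clique eirr tf cT md col cK'.
apply: (not_strong (stable_inl st) _ sK) => x xK.
case: (allinl x xK) => a E; subst x.
have [y yS gy] : exists2 y, y \in S0 & Gp e a y by apply: dom; rewrite inE.
by exists (inl y) => //; apply: imset_f.
Qed.

Definition fpart (x : (T * 'I_4) + nonC T) : option (nonC T) :=
  match x with inl a => insub a | inr w => Some w end.

Lemma insub_some (a : T * 'I_4) (w : nonC T) : (insub a == Some w) = (a == val w).
Proof.
case: insubP => [u Pu <-|nP]; first by rewrite /= val_eqE.
symmetry; apply/negP => /eqP E; move: nP; by rewrite E (valP w).
Qed.

Lemma part_exists : strong_clique (Gpp e) (Cpp T) ->
  (forall w, strong_clique (Gpp e) (pendant_pair w)) -> strong_clique_partition (Gpp e).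
Proof.
move=> sC sP; exists (preim_partition fpart [set: _]); split; first exact: preim_partitionP.
move=> K /imsetP [x _ ->].
case Ef: (fpart x) => [w|].
  set K0 := (X in strong_clique _ X).
  have -> : K0 = pendant_pair w; last exact: sP.
  apply/setP => y; rewrite /K0 !inE /=; case: y => [a|w'] /=.
    by rewrite eq_sym insub_some orbF.
  by rewrite (inj_eq (@Some_inj _)) eq_sym.
set K0 := (X in strong_clique _ X).
have -> : K0 = Cpp T; last exact: sC.
apply/setP => y; rewrite /K0 !inE /=; case: y => [a|w'] /=; last by rewrite inr_Cpp.
rewrite inl_Cpp inE; case: insubP => [u Pu _|nP] /=; first by rewrite (negbTE Pu).
by move: nP; rewrite negbK => ->.
Qed.

End Main.
Unset Implicit Arguments.

Theorem mainTheorem7 (T : finType) (e : rel T) :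
  simple_graph e -> triangle_free e -> 5 <= #|T| -> min_degree_ge e 3 ->
  [/\ diamond_free (Gp e), diamond_free (Gpp e) &
      [<-> ~ three_colorable e;
           strong_clique (Gp e) (Cp T);
           has_strong_clique (Gp e);
           strong_clique (Gpp e) (Cpp T);
           every_vertex_in_strong_clique (Gpp e);
           strong_clique (Gpp e) (Cpp T) /\
             (forall w : nonC T, strong_clique (Gpp e) (pendant_pair w));
           strong_clique_partition (Gpp e)]].
Proof.
move=> [esym eirr] tf cT md.
have [v0 _] : exists v : T, v \in T by apply/card_gt0P; apply: leq_trans cT.
have h40 : every_vertex_in_strong_clique (Gpp e) -> ~ three_colorable e.
  move=> H; case: (H (inl (v0, ord0))) => K [vK sK].
  exact: (not_col_of_vertex eirr tf cT md vK sK).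
split; first exact: (Gp_diamond eirr tf); first exact: (Gpp_diamond eirr tf).
have h01 : ~ three_colorable e -> strong_clique (Gp e) (Cp T) := Cp_strong esym eirr.
have h12 : strong_clique (Gp e) (Cp T) -> has_strong_clique (Gp e).
  by move=> sC; exists (Cp T).
have h23 : has_strong_clique (Gp e) -> strong_clique (Gpp e) (Cpp T).
  by case=> K sK; apply: (Cpp_strong esym eirr); exact: (not_col_of_strong eirr tf cT md sK.1 sK).
have h34 : strong_clique (Gpp e) (Cpp T) -> every_vertex_in_strong_clique (Gpp e).
  move=> sC [a|w].
  + case: (boolP (a.2 == ord0)) => a0.
      by exists (Cpp T); split => //; rewrite inl_Cpp inE.
    exists (pendant_pair (exist _ a a0 : nonC T)); split; last exact: (pend_strong eirr).
    by rewrite !inE eqxx.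
  + exists (pendant_pair w); split; last exact: (pend_strong eirr).
    by rewrite !inE eqxx orbT.
have h45 : every_vertex_in_strong_clique (Gpp e) -> strong_clique (Gpp e) (Cpp T) /\ (forall w : nonC T, strong_clique (Gpp e) (pendant_pair w)).
  move=> H; split; last exact: (pend_strong eirr).
  by apply: (Cpp_strong esym eirr); exact: h40.
have h56 := fun h : strong_clique (Gpp e) (Cpp T) /\ (forall w : nonC T, strong_clique (Gpp e) (pendant_pair w)) =>
   part_exists h.1 h.2.
have h60 : strong_clique_partition (Gpp e) -> ~ three_colorable e.
  case=> P [pP sP]; apply: h40 => x.
  case/and3P: pP => /eqP cov _ _.
  have : x \in cover P by rewrite cov inE.
  by case/bigcupP => K KP xK; exists K; split => //; apply: sP.
apply: AllIffConj h01 _; apply: AllIffConj h12 _; apply: AllIffConj h23 _.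
apply: AllIffConj h34 _; apply: AllIffConj h45 _; apply: AllIffConj h56 _.
exact: h60.
Qed.
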